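(* Let $v\in\{\mathrm{RR},\mathrm{VV},\mathrm{VN},\mathrm{AZ}\}$ and let $\mathbf X_1=(X_{11},\ldots,X_{1d})^\top$ be a $d$-dimensional random vector with mean $\boldsymbol\mu$ and covariance $\boldsymbol\Sigma$ satisfying Assumption 1 for the variant $v$ and Assumption 2. Then $\sigma^2_{C^v}>0$ and hence $\sigma^2_{B^v}>0$.
   Context: MCVs: $C^{\mathrm{RR}}=\sqrt{(\det\boldsymbol\Sigma)^{1/d}/(\boldsymbol\mu^\top\boldsymbol\mu)}$, $C^{\mathrm{VV}}=\sqrt{\mathrm{tr}\boldsymbol\Sigma/(\boldsymbol\mu^\top\boldsymbol\mu)}$, $C^{\mathrm{VN}}=\sqrt{1/(\boldsymbol\mu^\top\boldsymbol\Sigma^{-1}\boldsymbol\mu)}$, $C^{\mathrm{AZ}}=\sqrt{\boldsymbol\mu^\top\boldsymbol\Sigma\boldsymbol\mu/(\boldsymbol\mu^\top\boldsymbol\mu)^2}$. Assumption 1 (for variant $v$): $\boldsymbol\mu\neq\mathbf 0$ and all coordinates have finite fourth moments; moreover for $v\in\{\mathrm{RR},\mathrm{VN}\}$, $\boldsymbol\Sigma$ is regular; for $v=\mathrm{VV}$, $\boldsymbol\Sigma\neq\mathbf 0_{d\times d}$; for $v=\mathrm{AZ}$, $\boldsymbol\mu^\top\boldsymbol\Sigma\boldsymbol\mu>0$. Assumption 2: no coordinate of $\mathbf X_1$ is conditionally two-point distributed, where the $r$-th coordinate $Y_r$ of a random vector $\mathbf Y\in\mathbb R^d$ is called conditionally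 two-point distributed if, given the remaining components $(Y_s)_{s\neq r}$, it is (conditionally) degenerate or takes (conditionally) only two different values with positive probability. $\boldsymbol\Psi_3,\boldsymbol\Psi_4$: $[\boldsymbol\Psi_3]_{(a-1)d+r,s}=E(X_{1a}X_{1r}X_{1s})-E(X_{1a}X_{1r})E(X_{1s})$, $[\boldsymbol\Psi_4]_{(a-1)d+r,(b-1)d+s}=E(X_{1a}X_{1r}X_{1b}X_{1s})-E(X_{1a}X_{1r})E(X_{1b}X_{1s})$. For $\mathbf x\in\mathbb R^d$, $[\widetilde{\mathbf D}(\mathbf x)]_{(a-1)d+r,s}=-x_r\mathbf 1\{s=a\neq r\}-2x_s\mathbf 1\{s=r=a\}-x_a\mathbf 1\{r=s\neq a\}$. $\mathrm{vec}$ stacks columns, $\otimes$ is the Kronecker product. Row vectors: $\mathbf A_{\mathrm{RR}}=\Big(-2d\det(\boldsymbol\Sigma)\frac{\boldsymbol\mu^\top}{(\boldsymbol\mu^\top\boldsymbol\mu)^{d+1}}+\frac{\det(\boldsymbol\Sigma)(\mathrm{vec}(\boldsymbol\Sigma^{-1}))^\top}{(\boldsymbol\mu^\top\boldsymbol\mu)^d}\widetilde{\mathbf D}(\boldsymbol\mu),\ \frac{\det(\boldsymbol\Sigma)(\mathrm{vec}(\boldsymbol\Sigma^{-1}))^\top}{(\boldsymbol\mu^\top\boldsymbol\mu)^d}\Big)$, $\mathbf A_{\mathrm{VV}}=\Big(-2\,\mathrm{tr}(\boldsymbol\Sigma)\frac{\boldsymbol\mu^\top}{(\boldsymbol\mu^\top\boldsymbol\mu)^2}+\frac{(\mathrm{vec}(\mathbf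 I_d))^\top\widetilde{\mathbf D}(\boldsymbol\mu)}{\boldsymbol\mu^\top\boldsymbol\mu},\ \frac{(\mathrm{vec}(\mathbf I_d))^\top}{\boldsymbol\mu^\top\boldsymbol\mu}\Big)$, $\mathbf A_{\mathrm{VN}}=\Big(2\boldsymbol\mu^\top\boldsymbol\Sigma^{-1}-[(\boldsymbol\mu^\top\boldsymbol\Sigma^{-1})\otimes(\boldsymbol\mu^\top\boldsymbol\Sigma^{-1})]\widetilde{\mathbf D}(\boldsymbol\mu),\ -(\boldsymbol\mu^\top\boldsymbol\Sigma^{-1})\otimes(\boldsymbol\mu^\top\boldsymbol\Sigma^{-1})\Big)$, $\mathbf A_{\mathrm{AZ}}=\Big(-4\boldsymbol\mu^\top\boldsymbol\Sigma\boldsymbol\mu\frac{\boldsymbol\mu^\top}{(\boldsymbol\mu^\top\boldsymbol\mu)^3}+2\frac{\boldsymbol\mu^\top\boldsymbol\Sigma}{(\boldsymbol\mu^\top\boldsymbol\mu)^2}+\frac{(\boldsymbol\mu^\top\otimes\boldsymbol\mu^\top)\widetilde{\mathbf D}(\boldsymbol\mu)}{(\boldsymbol\mu^\top\boldsymbol\mu)^2},\ \frac{\boldsymbol\mu^\top\otimes\boldsymbol\mu^\top}{(\boldsymbol\mu^\top\boldsymbol\mu)^2}\Big)$. $S_{\mathrm{RR}}=d^{-2}(C^{\mathrm{RR}})^{2-4d}$, $S_{\mathrm{VV}}=(C^{\mathrm{VV}})^{-2}$, $S_{\mathrm{VN}}=(C^{\mathrm{VN}})^{6}$, $S_{\mathrm{AZ}}=(C^{\mathrm{AZ}})^{-2}$;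 $\sigma^2_{C^v}=\frac{S_v}{4}\mathbf A_v(\boldsymbol\mu,\boldsymbol\Sigma)\begin{pmatrix}\boldsymbol\Sigma&\boldsymbol\Psi_3^\top\\\boldsymbol\Psi_3&\boldsymbol\Psi_4\end{pmatrix}\mathbf A_v(\boldsymbol\mu,\boldsymbol\Sigma)^\top$ and $\sigma^2_{B^v}=(C^v)^{-4}\sigma^2_{C^v}$. *)

(* Defs.v *)
From HB Require Import structures.
From mathcomp Require Import all_boot all_order all_algebra.
From mathcomp Require Import all_classical all_reals all_analysis.
Set Implicit Arguments.
Unset Strict Implicit.
Unset Printing Implicit Defensive.
Import Order.TTheory GRing.Theory Num.Theory.
Import numFieldNormedType.Exports.
Local Open Scope classical_set_scope.
Local Open Scope ring_scope.

(* The four variants of the multivariate coefficient of variation. *)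
Inductive mcv_variant := RR | VV | VN | AZ.

(* Index convention: the paper's index (a-1)d+r of R^{d^2} is the MathComp
   index [mxvec_index a r] (= a*d + r with 0-based a, r); [mxvec M] has entry
   [M a r] at [mxvec_index a r]. *)

(* vec(M)^T : vec stacks columns, so entry (a-1)d+r is M_{r,a}. *)
Definition vecT {R : ringType} {d : nat} (M : 'M[R]_d) : 'rV[R]_(d * d) :=
  mxvec M^T.

(* Kronecker product of two row vectors u (x) w : entry (a-1)d+r is u_a w_r. *)
Definition kronr {R : ringType} {d : nat} (u w : 'rV[R]_d) : 'rV[R]_(d * d) :=
  mxvec (u^T *m w).

Definition Dtilde {R : ringType} {d : nat} (x : 'cV[R]_d) : 'M[R]_(d * d, d) :=
  \matrix_(k, s) (mxvec (\matrix_(a, r)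
      (- (x r 0) * ((s == a) && (a != r))%:R
       - 2%:R * x s 0 * ((s == r) && (r == a))%:R
       - x a 0 * ((r == s) && (s != a))%:R))) 0 k.

Section Moments.
Variables (R : realType) (d0 : measure_display) (T : measurableType d0)
  (P : probability T R) (d : nat) (X : 'I_d -> T -> R).

Definition Ex (f : T -> R) : R := fine ('E_P[f])%E.

Definition mu : 'cV[R]_d := \col_i Ex (X i).

Definition Sigma : 'M[R]_d :=
  \matrix_(a, b) (Ex (fun w => X a w * X b w) - mu a 0 * mu b 0).

Definition Psi3 : 'M[R]_(d * d, d) :=
  \matrix_(k, s) (mxvec (\matrix_(a, r)
     (Ex (fun w => X a w * X r w * X s w)
      - Ex (fun w => X a w * X r w) * Ex (X s)))) 0 k.

Definition Psi4 : 'M[R]_(d * d, d * d) :=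
  \matrix_(k, l) (mxvec (\matrix_(a, r)
     ((mxvec (\matrix_(b, s)
         (Ex (fun w => X a w * X r w * X b w * X s w)
          - Ex (fun w => X a w * X r w) * Ex (fun w => X b w * X s w)))) 0 l))) 0 k.

Definition assumption1 (v : mcv_variant) : Prop :=
  [/\ mu != 0,
      (forall i, P.-integrable setT (fun w => ((X i w) ^+ 4)%:E)) &
      match v with
      | RR | VN => Sigma \in unitmx
      | VV => Sigma != 0
      | AZ => 0 < (mu^T *m Sigma *m mu) 0 0
      end].

Definition rest_sigma (r : 'I_d) : set (set T) :=
  <<s [set A | exists s : 'I_d, s != r /\
        exists U : set R, measurable U /\ A = X s @^-1` U] >>.

Definition measurable_wrt (G : set (set T)) (f : T -> R) : Prop :=
  forall U : set R, measurable U -> G (f @^-1` U).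

(* X_r is conditionally two-point distributed: given (X_s)_{s<>r}, its
   conditional law is a.s. supported on at most two points, i.e. there are
   functions a, b of the remaining components with X_r in {a, b} a.s.
   (a = b covers the conditionally degenerate case). *)
Definition cond_two_point (r : 'I_d) : Prop :=
  exists a b : T -> R,
    [/\ measurable_wrt (rest_sigma r) a,
        measurable_wrt (rest_sigma r) b &
        {ae P, forall w, X r w = a w \/ X r w = b w}].

Definition assumption2 : Prop := forall r : 'I_d, ~ cond_two_point r.

End Moments.

Section Variance.
Variables (R : realType) (d : nat).

Definition dotmm (m : 'cV[R]_d) : R := (m^T *m m) 0 0.

Definition Avec (v : mcv_variant) (m : 'cV[R]_d) (S : 'M[R]_d)
  : 'rV[R]_(d + d * d) :=
  let mm := dotmm m in
  match v with
  | RR => row_mx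
      ((- (2%:R * d%:R * \det S / mm ^+ d.+1)) *: m^T
        + (\det S / mm ^+ d) *: (vecT (invmx S) *m Dtilde m))
      ((\det S / mm ^+ d) *: vecT (invmx S))
  | VV => row_mx
      ((- (2%:R * \tr S / mm ^+ 2)) *: m^T
        + mm^-1 *: (vecT (1%:M : 'M[R]_d) *m Dtilde m))
      (mm^-1 *: vecT (1%:M : 'M[R]_d))
  | VN => let u := m^T *m invmx S in row_mx
      (2%:R *: u - kronr u u *m Dtilde m)
      (- kronr u u)
  | AZ => row_mx
      ((- (4%:R * (m^T *m S *m m) 0 0 / mm ^+ 3)) *: m^T
        + (2%:R / mm ^+ 2) *: (m^T *m S)
        + mm^-2 *: (kronr m^T m^T *m Dtilde m))
      (mm^-2 *: kronr m^T m^T)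
  end.

Definition Cv (v : mcv_variant) (m : 'cV[R]_d) (S : 'M[R]_d) : R :=
  match v with
  | RR => Num.sqrt (\det S `^ (d%:R^-1) / dotmm m)
  | VV => Num.sqrt (\tr S / dotmm m)
  | VN => Num.sqrt (1 / (m^T *m invmx S *m m) 0 0)
  | AZ => Num.sqrt ((m^T *m S *m m) 0 0 / dotmm m ^+ 2)
  end.

Definition Sv (v : mcv_variant) (m : 'cV[R]_d) (S : 'M[R]_d) : R :=
  let C := Cv v m S in
  match v with
  | RR => d%:R ^- 2 * C `^ (2%:R - 4%:R * d%:R)
  | VV => C ^- 2
  | VN => C ^+ 6
  | AZ => C ^- 2
  end.

End Variance.

Definition sigma2C {R : realType} {d0 : measure_display} {T : measurableType d0}
  (P : probability T R) {d : nat} (X : 'I_d -> T -> R) (v : mcv_variant) : R :=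
  let m := mu P X in
  let S := Sigma P X in
  let A := Avec v m S in
  Sv v m S / 4%:R
  * (A *m block_mx S (Psi3 P X)^T (Psi3 P X) (Psi4 P X) *m A^T) 0 0.

Definition sigma2B {R : realType} {d0 : measure_display} {T : measurableType d0}
  (P : probability T R) {d : nat} (X : 'I_d -> T -> R) (v : mcv_variant) : R :=
  Cv v (mu P X) (Sigma P X) ^- 4 * sigma2C P X v.

(* Main.v *)
Require Import Defs.
From HB Require Import structures.
From mathcomp Require Import all_boot all_order all_algebra.
From mathcomp Require Import all_classical all_reals all_analysis.
From mathcomp Require Import ring lra measurable_realfun.
From mathcomp Require Import lebesgue_Rintegral lebesgue_integrable realfun.
Set Implicit Arguments.
Unset Strict Implicit.
Unset Printing Implicit Defensive.
Import Order.TTheory GRing.Theory Num.Theory.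
Import numFieldNormedType.Exports.
Local Open Scope classical_set_scope.
Local Open Scope ring_scope.


Section Ex_lemmas.
Variables (R : realType) (d0 : measure_display) (T : measurableType d0)
  (P : probability T R).

Local Notation int f := (P.-integrable setT (EFin \o f)).

Lemma ExE f : Ex P f = \int[P]_w f w.
Proof. by rewrite /Ex unlock. Qed.

Lemma int_meas f : int f -> measurable_fun setT f.
Proof. by move/measurable_int/measurable_EFinP. Qed.

Lemma intD f g : int f -> int g -> int (fun w => f w + g w).
Proof.
move=> hf hg; exact: eq_integrable (integrableD _ hf hg).
Qed.

Lemma intZ c f : int f -> int (fun w => c * f w).
Proof.
move=> hf; exact: eq_integrable (integrableZl _ c hf).
Qed.

Lemma intN f : int f -> int (fun w => - f w).
Proof.
move=> hf; apply: eq_integrable (intZ (-1) hf) => //.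
by move=> w _ /=; rewrite mulN1r.
Qed.

Lemma intB f g : int f -> int g -> int (fun w => f w - g w).
Proof. by move=> hf hg; apply: intD => //; apply: intN. Qed.

Lemma int_cst c : int (fun _ => c).
Proof. exact: finite_measure_integrable_cst. Qed.

Lemma int_le (f g : T -> R) : measurable_fun setT f -> int g ->
  (forall w, `|f w| <= `|g w|) -> int f.
Proof.
move=> mf hg fg; apply: le_integrable hg => //.
  exact/measurable_EFinP.
by move=> w _ /=; rewrite lee_fin.
Qed.

Lemma int_sum I (s : seq I) (F : I -> T -> R) :
  (forall i, int (F i)) -> int (fun w => \sum_(i <- s) F i w).
Proof.
move=> hF; elim: s => [|i s IH].
  by apply: eq_integrable (int_cst 0) => // w _ /=; rewrite big_nil.
by apply: eq_integrable (intD (hF i) IH) => // w _ /=; rewrite big_cons.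
Qed.

Lemma ExD f g : int f -> int g -> Ex P (fun w => f w + g w) = Ex P f + Ex P g.
Proof. by move=> hf hg; rewrite !ExE RintegralD. Qed.

Lemma ExZ c f : int f -> Ex P (fun w => c * f w) = c * Ex P f.
Proof. by move=> hf; rewrite !ExE RintegralZl. Qed.

Lemma Ex_cst c : Ex P (fun _ => c) = c.
Proof. by rewrite ExE Rintegral_cst // [X in fine X](_ : _ = 1%E) ?mulr1 //; exact: probability_setT. Qed.

Lemma ExB f g : int f -> int g -> Ex P (fun w => f w - g w) = Ex P f - Ex P g.
Proof. by move=> hf hg; rewrite !ExE RintegralB. Qed.

Lemma Ex_sum I (s : seq I) (F : I -> T -> R) :
  (forall i, int (F i)) -> Ex P (fun w => \sum_(i <- s) F i w) = \sum_(i <- s) Ex P (F i).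
Proof.
move=> hF; elim: s => [|i s IH].
  by rewrite big_nil -{2}(Ex_cst 0); congr (Ex P _); apply: funext => w; rewrite big_nil.
rewrite big_cons -IH -ExD //; last exact: int_sum.
by congr (Ex P _); apply: funext => w; rewrite big_cons.
Qed.

Lemma Ex_ge0 f : (forall w, 0 <= f w) -> 0 <= Ex P f.
Proof. by move=> h; rewrite ExE; apply: Rintegral_ge0. Qed.

Lemma Ex_eq0 f : int f -> (forall w, 0 <= f w) -> Ex P f = 0 ->
  {ae P, forall w, f w = 0}.
Proof.
move=> hf f0 E0.
have mf := int_meas hf.
have : (\int[P]_(w in setT) `|(f w)%:E| = 0)%E.
  have fin := integrable_fin_num measurableT hf.
  rewrite ExE /Rintegral in E0.
  transitivity (\int[P]_(w in setT) (EFin \o f) w)%E.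
    by apply: eq_integral => w _; rewrite abse_EFin ger0_norm.
  by rewrite -(fineK fin) E0.
move/(ae_eq_integral_abs P measurableT (f:=EFin \o f)).
move=> /(_ (iffRL (measurable_EFinP _ _) mf)).
apply: filterS => w /(_ I) /= [].
done.
Qed.

End Ex_lemmas.


Section Cov.
Variables (R : realType) (d0 : measure_display) (T : measurableType d0)
  (P : probability T R).
Local Notation int f := (P.-integrable setT (EFin \o f)).
Variables (n : nat) (Y : 'I_n -> T -> R).
Hypothesis mY : forall j, measurable_fun setT (Y j).
Hypothesis iY2 : forall j, int (fun w => Y j w ^+ 2).

Lemma intY j : int (Y j).
Proof.
apply: (int_le (mY j) (intD (int_cst P 1) (iY2 j))) => w.
rewrite [X in _ <= X]ger0_norm; last by rewrite addr_ge0 // sqr_ge0.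
have := sqr_ge0 (Y j w). case: (lerP 0 (Y j w)) => h _.
  by rewrite ger0_norm //; nra.
by rewrite ltr0_norm //; nra.
Qed.

Lemma intYY j k : int (fun w => Y j w * Y k w).
Proof.
apply: (int_le _ (intD (iY2 j) (iY2 k))).
  exact: measurable_funM.
move=> w; rewrite [X in _ <= X]ger0_norm; last by rewrite addr_ge0 // sqr_ge0.
rewrite normrM.
have h1 := normr_ge0 (Y j w); have h2 := normr_ge0 (Y k w).
rewrite -(real_normK (num_real (Y j w))) -(real_normK (num_real (Y k w))).
nra.
Qed.

Definition mY_ j := Ex P (Y j).
Definition Gm : 'M[R]_n :=
  \matrix_(j, k) (Ex P (fun w => Y j w * Y k w) - Ex P (Y j) * Ex P (Y k)).

Lemma intW j k : int (fun w => (Y j w - mY_ j) * (Y k w - mY_ k)).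
Proof.
have -> : (fun w => (Y j w - mY_ j) * (Y k w - mY_ k)) =
  (fun w => (Y j w * Y k w - mY_ k * Y j w) - (mY_ j * Y k w - mY_ j * mY_ k)).
  by apply: funext => w; ring.
apply: intB; apply: intB; try exact: intYY; try exact: intZ (intY _);
  exact: int_cst.
Qed.

Lemma ExW j k : Ex P (fun w => (Y j w - mY_ j) * (Y k w - mY_ k)) = Gm j k.
Proof.
have -> : (fun w => (Y j w - mY_ j) * (Y k w - mY_ k)) =
  (fun w => (Y j w * Y k w - mY_ k * Y j w) - (mY_ j * Y k w - mY_ j * mY_ k)).
  by apply: funext => w; ring.
rewrite ExB; first last.
- by apply: intB; [exact: intZ (intY _)| exact: int_cst].
- by apply: intB; [exact: intYY| exact: intZ (intY _)].
rewrite ExB; [|exact: intYY|exact: intZ (intY _)].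
rewrite ExB; [|exact: intZ (intY _)|exact: int_cst].
rewrite Ex_cst !ExZ; try exact: intY.
rewrite mxE /mY_; ring.
Qed.

Lemma quad_var (a : 'rV[R]_n) :
  (a *m Gm *m a^T) 0 0 =
  Ex P (fun w => (\sum_j a 0 j * (Y j w - mY_ j)) ^+ 2).
Proof.
have -> : (fun w => (\sum_j a 0 j * (Y j w - mY_ j)) ^+ 2) =
  (fun w => \sum_j \sum_k (a 0 j * a 0 k) * ((Y j w - mY_ j) * (Y k w - mY_ k))).
  apply: funext => w; rewrite expr2 mulr_suml; apply: eq_bigr => j _.
  rewrite mulr_sumr; apply: eq_bigr => k _; ring.
rewrite Ex_sum; last first.
  move=> j; apply: int_sum => k; apply: intZ; exact: intW.
have E j : Ex P (fun w => \sum_k (a 0 j * a 0 k) * ((Y j w - mY_ j) * (Y k w - mY_ k)))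
   = \sum_k (a 0 j * a 0 k) * Gm j k.
  rewrite Ex_sum; last by move=> k; apply: intZ; exact: intW.
  by apply: eq_bigr => k _; rewrite ExZ ?ExW //; exact: intW.
rewrite (eq_bigr _ (fun j _ => E j)).
rewrite mxE exchange_big; apply: eq_bigr => k _.
rewrite !mxE mulr_suml; apply: eq_bigr => j _; rewrite !mxE; ring.
Qed.

Lemma int_quad (a : 'rV[R]_n) :
  int (fun w => (\sum_j a 0 j * (Y j w - mY_ j)) ^+ 2).
Proof.
have -> : (fun w => (\sum_j a 0 j * (Y j w - mY_ j)) ^+ 2) =
  (fun w => \sum_j \sum_k (a 0 j * a 0 k) * ((Y j w - mY_ j) * (Y k w - mY_ k))).
  apply: funext => w; rewrite expr2 mulr_suml; apply: eq_bigr => j _.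
  rewrite mulr_sumr; apply: eq_bigr => k _; ring.
apply: int_sum => j; apply: int_sum => k; apply: intZ; exact: intW.
Qed.

Lemma quad_ge0 (a : 'rV[R]_n) : 0 <= (a *m Gm *m a^T) 0 0.
Proof. by rewrite quad_var; apply: Ex_ge0 => w; exact: sqr_ge0. Qed.

End Cov.


Section PSD.
Variables (R : realFieldType) (d : nat) (S : 'M[R]_d).
Hypothesis psd : forall x : 'rV_d, 0 <= (x *m S *m x^T) 0 0.
Hypothesis sym : S^T = S.

Lemma tr11 (M : 'M[R]_1) : M^T 0 0 = M 0 0.
Proof. by rewrite mxE. Qed.

Lemma qf_swap (x y : 'rV[R]_d) : (y *m S *m x^T) 0 0 = (x *m S *m y^T) 0 0.
Proof. by rewrite -tr11 !trmx_mul trmxK sym mulmxA. Qed.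

Lemma rv_eq0 (z : 'rV[R]_d) : (z *m z^T) 0 0 = 0 -> z = 0.
Proof.
rewrite mxE => h; apply/rowP => i; rewrite mxE.
have /psumr_eq0P H : \sum_(j < d) z 0 j ^+ 2 = 0.
  by rewrite -[RHS]h; apply: eq_bigr => j _; rewrite [z^T _ _]mxE expr2.
by apply/eqP; rewrite -sqrf_eq0; apply/eqP; apply: H => // j _; exact: sqr_ge0.
Qed.

Lemma psd_null (x : 'rV[R]_d) : (x *m S *m x^T) 0 0 = 0 -> x *m S = 0.
Proof.
move=> h0; set z := x *m S.
set b := (z *m z^T) 0 0; set c := (z *m S *m z^T) 0 0.
have hb : (x *m S *m z^T) 0 0 = b by [].
have b0 : 0 <= b by rewrite /b mxE; apply: sumr_ge0 => j _; rewrite [z^T _ _]mxE -expr2; exact: sqr_ge0.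
have c0 : 0 <= c by exact: psd.
have E t : ((x + t *: z) *m S *m (x + t *: z)^T) 0 0 = 2 * t * b + t ^+ 2 * c.
  rewrite linearD /= linearZ /= !mulmxDl !mulmxDr -!scalemxAl -!scalemxAr.
  have := qf_swap x z; rewrite /= => hs.
  move: hs h0 hb; rewrite /c.
  set m1 := x *m S *m x^T; set m2 := x *m S *m z^T; set m3 := z *m S *m x^T.
  set m4 := z *m S *m z^T.
  clearbody m1 m2 m3 m4; move=> hs h0 hb; rewrite !mxE hs h0 hb; ring.
pose t := - b / (c + 1).
have ht : t * (c + 1) = - b by rewrite /t mulfVK // gt_eqF // ltr_wpDl.
have := psd (x + t *: z); rewrite E => H.
have : b = 0 by nra.
by move/rv_eq0.
Qed.

Lemma psd_pos (x : 'rV[R]_d) : x *m S != 0 -> 0 < (x *m S *m x^T) 0 0.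
Proof.
move=> h; rewrite lt_def psd andbT; apply/eqP => /psd_null h'.
by rewrite h' eqxx in h.
Qed.

Lemma delta_quad (M : 'M[R]_d) (r : 'I_d) :
  ((delta_mx 0 r : 'rV[R]_d) *m M *m (delta_mx 0 r : 'rV[R]_d)^T) 0 0 = M r r.
Proof. by rewrite trmx_delta -rowE -colE !mxE. Qed.

Lemma inv_diag (r : 'I_d) : S \in unitmx -> invmx S r r != 0.
Proof.
move=> uS; apply/eqP => h.
set y := (delta_mx 0 r : 'rV[R]_d) *m invmx S.
have yS : y *m S = delta_mx 0 r by rewrite /y -mulmxA mulVmx // mulmx1.
have : (y *m S *m y^T) 0 0 = 0.
  by rewrite yS /y trmx_mul trmx_inv sym mulmxA delta_quad.
move/psd_null; rewrite yS => /matrixP /(_ 0 r).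
by rewrite !mxE !eqxx /= => /eqP; rewrite oner_eq0.
Qed.

Lemma vn_pos (m : 'cV[R]_d) : S \in unitmx -> m != 0 ->
  0 < (m^T *m invmx S *m m) 0 0.
Proof.
move=> uS m0.
set y := m^T *m invmx S.
have yS : y *m S = m^T by rewrite /y -mulmxA mulVmx // mulmx1.
have -> : (m^T *m invmx S *m m) = y *m S *m y^T.
  by rewrite yS /y trmx_mul trmx_inv sym trmxK mulmxA.
apply: psd_pos; rewrite yS; apply: contra m0 => /eqP h.
by rewrite -(trmxK m) h linear0.
Qed.

Lemma tr_pos : S != 0 -> 0 < \tr S.
Proof.
move=> S0; have Sii i : S i i = ((delta_mx 0 i : 'rV[R]_d) *m S *m (delta_mx 0 i : 'rV[R]_d)^T) 0 0.
  by rewrite delta_quad.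
rewrite lt_def; apply/andP; split; last first.
  by apply: sumr_ge0 => i _; rewrite Sii.
apply: contra S0 => /eqP /psumr_eq0P H.
apply/eqP/row_matrixP => i; rewrite row0 rowE; apply: psd_null.
by rewrite -Sii; apply: H => // j _; rewrite Sii.
Qed.

End PSD.

Lemma rv_neq0 (R : ringType) n (z : 'rV[R]_n) : z != 0 -> exists r, z 0 r != 0.
Proof.
move=> z0; apply/existsP; apply: contraR z0 => /existsPn H.
by apply/eqP/rowP => r; rewrite mxE; apply/eqP; move: (H r); rewrite negbK.
Qed.

Lemma cv_neq0 (R : ringType) n (z : 'cV[R]_n) : z != 0 -> exists r, z r 0 != 0.
Proof.
move=> z0; have : z^T != 0 by apply: contra z0 => /eqP h; rewrite -(trmxK z) h linear0.
by case/rv_neq0 => r; rewrite mxE => h; exists r.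
Qed.


Lemma sum_mxvec (R : zmodType) m n (F : 'I_(m * n) -> R) :
  \sum_k F k = \sum_(a < m) \sum_(b < n) F (mxvec_index a b).
Proof.
rewrite (reindex _ (curry_mxvec_bij _ _)) /= pair_bigA.
by apply: eq_bigr => [[a b]].
Qed.

Section Main.
Variables (R : realType) (d0 : measure_display) (T : measurableType d0)
  (P : probability T R) (d : nat) (X : 'I_d -> T -> R).
Local Notation int f := (P.-integrable setT (EFin \o f)).
Hypothesis hX : forall i, measurable_fun setT (X i).
Hypothesis H4 : forall i, P.-integrable setT (fun w => ((X i w) ^+ 4)%:E).

Lemma iX4 i : int (fun w => X i w ^+ 4).
Proof. exact: H4. Qed.

Lemma iX2 i : int (fun w => X i w ^+ 2).
Proof.
apply: (int_le _ (intD (int_cst P 1) (iX4 i))).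
  exact: measurable_funX.
move=> w; have h4 : X i w ^+ 4 = (X i w ^+ 2) ^+ 2 by rewrite -exprM.
rewrite h4 !ger0_norm ?sqr_ge0 //; last by rewrite addr_ge0 // sqr_ge0.
have := sqr_ge0 (X i w); nra.
Qed.

Lemma Sigma_Gm : Sigma P X = Gm P X.
Proof. by apply/matrixP => a b; rewrite !mxE. Qed.

Lemma Sigma_psd (x : 'rV[R]_d) : 0 <= (x *m Sigma P X *m x^T) 0 0.
Proof. rewrite Sigma_Gm; apply: quad_ge0 => //; exact: iX2. Qed.

Lemma Sigma_sym : (Sigma P X)^T = Sigma P X.
Proof.
apply/matrixP => a b; rewrite !mxE mulrC; congr (_ - _).
by congr (Ex P _); apply: funext => w; rewrite mulrC.
Qed.

Definition Yv w : 'rV[R]_(d + d * d) :=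
  row_mx (\row_i X i w) (mxvec (\matrix_(a, b) (X a w * X b w))).
Definition Yf (j : 'I_(d + d * d)) w := Yv w 0 j.

Lemma YL i : Yf (lshift (d * d) i) = X i.
Proof. by apply: funext => w; rewrite /Yf /Yv row_mxEl mxE. Qed.

Lemma YR a b : Yf (rshift d (mxvec_index a b)) = fun w => X a w * X b w.
Proof. by apply: funext => w; rewrite /Yf /Yv row_mxEr mxvecE mxE. Qed.

Lemma mYf j : measurable_fun setT (Yf j).
Proof.
rewrite -(@fintype.splitK d (d * d) j); case: (fintype.split j) => [i|k] /=; first by rewrite YL.
by case/mxvec_indexP: k => a b; rewrite YR; apply: measurable_funM.
Qed.

Lemma iYf2 j : int (fun w => Yf j w ^+ 2).
Proof.
rewrite -(@fintype.splitK d (d * d) j); case: (fintype.split j) => [i|k] /=; first by rewrite YL; exact: iX2.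
case/mxvec_indexP: k => a b; rewrite YR.
apply: (int_le _ (intD (iX4 a) (iX4 b))).
  by apply: measurable_funX; apply: measurable_funM.
move=> w; have h4 x : x ^+ 4 = (x ^+ 2) ^+ 2 :> R by rewrite -exprM.
rewrite !h4 !ger0_norm ?sqr_ge0 //; last by rewrite addr_ge0 // sqr_ge0.
rewrite exprMn.
have := sqr_ge0 (X a w ^+ 2 - X b w ^+ 2).
have := sqr_ge0 (X a w); have := sqr_ge0 (X b w).
nra.
Qed.

Lemma block_Gm :
  block_mx (Sigma P X) (Psi3 P X)^T (Psi3 P X) (Psi4 P X) = Gm P Yf.
Proof.
apply/matrixP => j k; rewrite -(@fintype.splitK d (d * d) j) -(@fintype.splitK d (d * d) k).
case: (fintype.split j) => [a|ka]; case: (fintype.split k) => [b|kb] /=.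
- by rewrite block_mxEul !mxE !YL.
- rewrite block_mxEur; case/mxvec_indexP: kb => b c.
  rewrite [LHS]mxE [LHS]mxE mxvecE !mxE YL YR.
  congr (_ - _); last by rewrite mulrC.
  by congr (Ex P _); apply: funext => w; rewrite mulrC mulrA.
- rewrite block_mxEdl; case/mxvec_indexP: ka => a c.
  by rewrite [LHS]mxE mxvecE !mxE YL YR.
- rewrite block_mxEdr; case/mxvec_indexP: ka => a c; case/mxvec_indexP: kb => b e.
  rewrite [LHS]mxE mxvecE [LHS]mxE mxvecE !mxE !YR.
  by congr (_ - _); congr (Ex P _); apply: funext => w; rewrite !mulrA.
Qed.

End Main.


Lemma quad_split (R : comRingType) d (l : 'I_d -> R) (q : 'I_d -> 'I_d -> R)
  (x : 'I_d -> R) r :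
  \sum_i l i * x i + \sum_a \sum_b q a b * (x a * x b) =
  q r r * x r ^+ 2 + (l r + \sum_(b | b != r) (q r b + q b r) * x b) * x r
  + (\sum_(i | i != r) l i * x i
     + \sum_(a | a != r) \sum_(b | b != r) q a b * (x a * x b)).
Proof.
have h1 : \sum_i l i * x i = l r * x r + \sum_(i | i != r) l i * x i.
  exact: bigD1.
have h3 : \sum_a \sum_b q a b * (x a * x b) =
  \sum_b q r b * (x r * x b) + \sum_(a | a != r) \sum_b q a b * (x a * x b).
  exact: bigD1.
have h2 : \sum_b q r b * (x r * x b) =
  q r r * (x r * x r) + \sum_(b | b != r) q r b * (x r * x b).
  exact: bigD1.
have h4 : \sum_(a | a != r) \sum_b q a b * (x a * x b) =
  \sum_(a | a != r) q a r * (x a * x r) +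
  \sum_(a | a != r) \sum_(b | b != r) q a b * (x a * x b).
  rewrite -big_split /=; apply: eq_bigr => a _; exact: bigD1.
have h5 : (\sum_(b | b != r) (q r b + q b r) * x b) * x r =
  \sum_(b | b != r) q r b * (x r * x b) + \sum_(a | a != r) q a r * (x a * x r).
  rewrite mulr_suml -big_split /=; apply: eq_bigr => b _; ring.
rewrite h1 h3 h2 h4 mulrDl h5; ring.
Qed.

Lemma qroot (R : rcfType) (al be ga x : R) : al != 0 ->
  al * x ^+ 2 + be * x + ga = 0 ->
  x = (- be + Num.sqrt (be ^+ 2 - 4 * al * ga)) / (2 * al) \/
  x = (- be - Num.sqrt (be ^+ 2 - 4 * al * ga)) / (2 * al).
Proof.
move=> a0 h.
have E : be ^+ 2 - 4 * al * ga = (2 * al * x + be) ^+ 2.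
  have -> : ga = - (al * x ^+ 2 + be * x) by rewrite -(subr0 ga) -h; ring.
  ring.
have a2 : 2 * al != 0 by rewrite mulf_neq0 // pnatr_eq0.
rewrite E sqrtr_sqr; case: (lerP 0 (2 * al * x + be)) => hs.
  by left; rewrite ger0_norm //; field.
by right; rewrite ltr0_norm //; field.
Qed.

Section Meas.
Variables (R : realType) (d0 : measure_display) (T : measurableType d0)
  (d : nat) (X : 'I_d -> T -> R) (r : 'I_d).

Definition G0 := [set A | exists s : 'I_d, s != r /\
        exists U : set R, measurable U /\ A = X s @^-1` U].
Local Notation TG := (g_sigma_algebraType G0).
Local Notation mw f := (@measurable_fun _ _ TG R setT f).

Lemma meas_wrt (f : T -> R) : mw f -> measurable_wrt (rest_sigma X r) f.
Proof. move=> mf U mU; have := mf measurableT U mU; rewrite (@setTI TG); exact. Qed.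

Lemma mX_rest s : s != r -> mw (X s).
Proof.
move=> sr _ U mU; rewrite setTI; apply: sub_sigma_algebra.
by exists s; split => //; exists U.
Qed.

Lemma msum (Pr : pred 'I_d) (F : 'I_d -> T -> R) :
  (forall i, Pr i -> mw (F i)) -> mw (fun w => \sum_(i | Pr i) F i w).
Proof.
move=> h.
rewrite (_ : (fun w => _) = (fun w => \sum_i (if Pr i then F i w else 0))); last first.
  by apply: funext => w; rewrite big_mkcond.
apply: measurable_sum => i; case: (boolP (Pr i)) => Pi; first exact: h.
exact: measurable_cst.
Qed.

End Meas.

Section MainPos.
Variables (R : realType) (d0 : measure_display) (T : measurableType d0)
  (P : probability T R) (d : nat) (X : 'I_d -> T -> R).
Hypothesis hX : forall i, measurable_fun setT (X i).
Hypothesis H4 : forall i, P.-integrable setT (fun w => ((X i w) ^+ 4)%:E).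
Hypothesis H2 : assumption2 P X.
Variables (A : 'rV[R]_(d + d * d)) (r : 'I_d).
Hypothesis hA : A 0 (rshift d (mxvec_index r r)) != 0.

Local Notation TG := (g_sigma_algebraType (G0 X r)).
Local Notation mw f := (@measurable_fun _ _ TG R setT f).

Let l i := A 0 (lshift (d * d) i).
Let q a b := A 0 (rshift d (mxvec_index a b)).
Let al := q r r.
Let c := \sum_j A 0 j * mY_ P (Yf X) j.
Let be w := l r + \sum_(b | b != r) (q r b + q b r) * X b w.
Let ga w := \sum_(i | i != r) l i * X i w
   + \sum_(a | a != r) \sum_(b | b != r) q a b * (X a w * X b w).
Let Dsc w := be w ^+ 2 - 4 * al * (ga w - c).
Let ra w := (- be w + Num.sqrt (Dsc w)) / (2 * al).
Let rb w := (- be w - Num.sqrt (Dsc w)) / (2 * al).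

Lemma msqrt (g : T -> R) : mw g -> mw (fun w => Num.sqrt (g w)).
Proof.
move=> mg; exact: (measurableT_comp (continuous_measurable_fun (@sqrt_continuous R)) mg).
Qed.

Lemma mbe : mw be.
Proof.
apply: measurable_funD; first exact: measurable_cst.
apply: msum => b br; apply: measurable_funM; first exact: measurable_cst.
exact: mX_rest.
Qed.

Lemma mga : mw ga.
Proof.
apply: measurable_funD.
  apply: msum => i ir; apply: measurable_funM; first exact: measurable_cst.
  exact: mX_rest.
apply: msum => a ar; apply: msum => b br.
apply: measurable_funM; first exact: measurable_cst.
by apply: measurable_funM; exact: mX_rest.
Qed.

Lemma mDsc : mw Dsc.
Proof.
apply: measurable_funB; first exact: measurable_funX mbe.
apply: measurable_funM; first exact: measurable_cst.
apply: measurable_funB; first exact: mga.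
exact: measurable_cst.
Qed.

Lemma mra : mw ra.
Proof.
apply: measurable_funM; last exact: measurable_cst.
apply: measurable_funD; first exact: measurable_funN mbe.
exact: msqrt mDsc.
Qed.

Lemma mrb : mw rb.
Proof.
apply: measurable_funM; last exact: measurable_cst.
apply: measurable_funB; first exact: measurable_funN mbe.
exact: msqrt mDsc.
Qed.

Lemma Zdec w : \sum_j A 0 j * Yf X j w =
  \sum_i l i * X i w + \sum_a \sum_b q a b * (X a w * X b w).
Proof.
rewrite big_split_ord /=; congr (_ + _).
  by apply: eq_bigr => i _; rewrite YL.
rewrite sum_mxvec; apply: eq_bigr => a _; apply: eq_bigr => b _.
by rewrite YR.
Qed.

Lemma main_pos :
  0 < (A *m block_mx (Sigma P X) (Psi3 P X)^T (Psi3 P X) (Psi4 P X) *m A^T) 0 0.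
Proof.
have mY := mYf hX; have iY := iYf2 hX H4.
rewrite block_Gm lt_def (quad_ge0 mY iY) andbT; apply/eqP => E0.
rewrite (quad_var mY iY) in E0.
have ae := Ex_eq0 (int_quad mY iY A) (fun w => sqr_ge0 _) E0.
case: (@H2 r); exists ra, rb; split.
- apply: meas_wrt; exact: mra.
- apply: meas_wrt; exact: mrb.
apply: filterS ae => w /eqP; rewrite sqrf_eq0 => /eqP hw.
have hZ : \sum_j A 0 j * Yf X j w = c.
  apply/eqP; rewrite -subr_eq0; apply/eqP; rewrite -[RHS]hw /c -sumrB.
  by apply: eq_bigr => j _; ring.
rewrite Zdec (quad_split _ _ _ r) in hZ.
apply: qroot; first exact: hA.
rewrite -hZ /ga /be /al; ring.
Qed.

End MainPos.

Unset Implicit Arguments.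
Set Strict Implicit.
Local Close Scope classical_set_scope.


Lemma dotmm_gt0 (R : realType) d (m : 'cV[R]_d) : m != 0 -> 0 < dotmm m.
Proof.
move=> m0; rewrite /dotmm lt_def; apply/andP; split.
  apply: contra m0 => /eqP h; rewrite -(trmxK m) (rv_eq0 (z := m^T)) ?linear0 //.
  by rewrite trmxK.
rewrite mxE; apply: sumr_ge0 => i _; rewrite mxE -expr2; exact: sqr_ge0.
Qed.

Theorem lemma2 (R : realType) (d0 : measure_display) (T : measurableType d0)
  (P : probability T R) (d : nat) (X : 'I_d -> T -> R) (v : mcv_variant) :
  (forall i, measurable_fun setT (X i)) ->
  assumption1 P X v ->
  assumption2 P X ->
  0 < sigma2C P X v /\ 0 < sigma2B P X v.
Proof.
move=> hX [mu0 H4 Hv] H2.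
have psd := Sigma_psd hX H4; have sym := Sigma_sym P X.
have mm0 := @dotmm_gt0 _ _ _ mu0.
have [r0 _] := cv_neq0 mu0.
have d0' : (0 < d)%N := leq_ltn_trans (leq0n _) (ltn_ord r0).
suff [Sv0 [Cv0 [r hr]]] : 0 < Sv v (mu P X) (Sigma P X) /\ 0 < Cv v (mu P X) (Sigma P X) /\
  exists r, Avec v (mu P X) (Sigma P X) 0 (rshift d (mxvec_index r r)) != 0.
  have key := main_pos hX H4 H2 hr.
  have hC : 0 < sigma2C P X v.
    by rewrite /sigma2C /=; apply: mulr_gt0 => //; apply: divr_gt0.
  split => //; rewrite /sigma2B; apply: mulr_gt0 => //.
  by rewrite invr_gt0 exprn_gt0.
case: v Hv => /= Hv.
-
  have dS : \det (Sigma P X) != 0 by rewrite -unitfE -unitmxE.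
  have Cp : 0 < Num.sqrt (\det (Sigma P X) `^ (d%:R^-1) / dotmm (mu P X)).
    rewrite sqrtr_gt0 divr_gt0 // /powR (negbTE dS); exact: expR_gt0.
  split; first by apply: mulr_gt0; [rewrite invr_gt0 exprn_gt0 // ltr0n | exact: powR_gt0].
  split => //; exists r0.
  rewrite row_mxEr mxE mxvecE mxE mulf_neq0 //; last exact: inv_diag.
  by rewrite mulf_neq0 // invr_eq0 expf_neq0 // gt_eqF.
-
  have tp := tr_pos psd sym Hv.
  have Cp : 0 < Num.sqrt (\tr (Sigma P X) / dotmm (mu P X)).
    by rewrite sqrtr_gt0 divr_gt0.
  split; first by rewrite invr_gt0 exprn_gt0.
  split => //; exists r0.
  by rewrite row_mxEr mxE mxvecE !mxE eqxx mulr1 invr_eq0 gt_eqF.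
-
  have vp := vn_pos psd sym Hv mu0.
  have Cp : 0 < Num.sqrt (1 / ((mu P X)^T *m invmx (Sigma P X) *m mu P X) 0 0).
    by rewrite sqrtr_gt0 divr_gt0.
  split; first by rewrite exprn_gt0.
  split => //.
  set u := (mu P X)^T *m invmx (Sigma P X).
  have u0 : u != 0.
    apply: contra mu0 => /eqP hu.
    have : u *m Sigma P X = (mu P X)^T by rewrite /u -mulmxA mulVmx // mulmx1.
    by rewrite hu mul0mx => /(congr1 trmx); rewrite trmxK linear0 => <-.
  have [r hr] := rv_neq0 u0; exists r.
  rewrite row_mxEr mxE oppr_eq0 /kronr mxvecE mxE big_ord1 [u^T _ _]mxE.
  exact: mulf_neq0.
-
  have Cp : 0 < Num.sqrt (((mu P X)^T *m Sigma P X *m mu P X) 0 0 / dotmm (mu P X) ^+ 2).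
    by rewrite sqrtr_gt0 divr_gt0 // exprn_gt0.
  split; first by rewrite invr_gt0 exprn_gt0.
  split => //.
  have [r hr] := cv_neq0 mu0; exists r.
  rewrite row_mxEr !mxE mxvecE mxE big_ord1 !mxE.
  move: hr; rewrite mxE => hr; apply: mulf_neq0; last exact: mulf_neq0.
  by rewrite invr_eq0 expf_neq0 // gt_eqF.
Qed.
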